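(* Let $W$ be a matrix weight. For all $J\in\mathcal{D}$ and $1\le j\le d$, \[ \|W(J_-)^{1/2}h_J^{W,j}(J_-)\|_{\mathbb{C}^d}\le C(d),\qquad \|W(J_+)^{1/2}h_J^{W,j}(J_+)\|_{\mathbb{C}^d}\le C(d), \] where $C(d)$ depends only on $d$ and $h_J^{W,j}(J_\pm)$ denotes the constant value of $h_J^{W,j}$ on $J_\pm$.
   Context: A matrix weight is a $d\times d$ matrix-valued function on $\mathbb{R}$, positive definite a.e., with locally integrable entries. $\mathcal{D}$ is the standard dyadic grid, $J_\pm$ the right/left halves of $J$, $W(J)=\int_JW$. For $J\in\mathcal{D}$ let $v_J^1,\dots,v_J^d$ be an orthonormal eigenbasis of the positive definite matrix $W(J)W(J_+)^{-1}W(J_-)=W(J_-)W(J_+)^{-1}W(J_-)+W(J_-)$, $w_J^j=\|(W(J)W(J_+)^{-1}W(J_-))^{1/2}v_J^j\|$, and $h_J^{W,j}=(w_J^j)^{-1}\big(W(J_+)^{-1}W(J_-)v_J^j\mathbf{1}_{J_+}-v_J^j\mathbf{1}_{J_-}\big)$. *)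

(* Defs.v *)
(* Complex scalars: an arbitrary numClosedFieldType F
   (C-like: algebraically closed, with conjugation and order on reals). *)
From HB Require Import structures.
From mathcomp Require Import all_boot all_order all_algebra.
Set Implicit Arguments. Unset Strict Implicit. Unset Printing Implicit Defensive.
Import Order.TTheory GRing.Theory Num.Theory.
Local Open Scope ring_scope.
Local Open Scope sesquilinear_scope.

Section Defs.
Variables (F : numClosedFieldType) (d : nat).

Definition adj {m n} (A : 'M[F]_(m, n)) : 'M[F]_(n, m) := A ^t* .

Definition posdef (A : 'M[F]_d) : Prop :=
  A \is hermsymmx /\ forall x : 'cV[F]_d, x != 0 -> 0 < (adj x *m A *m x) 0 0.
Definition possemidef (A : 'M[F]_d) : Prop :=
  A \is hermsymmx /\ forall x : 'cV[F]_d, 0 <= (adj x *m A *m x) 0 0.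

Definition is_sqrtm (S A : 'M[F]_d) : Prop := possemidef S /\ S *m S = A.

Definition vnorm (x : 'cV[F]_d) : F := sqrtC (\sum_i `|x i 0| ^+ 2).
Definition inner (u v : 'cV[F]_d) : F := (adj u *m v) 0 0.

(* Dyadic intervals: (n, k) stands for J = [k 2^-n, (k+1) 2^-n).
   Children: J_- = (n+1, 2k), J_+ = (n+1, 2k+1). *)
Definition dyad := (int * int)%type.
Definition dleft (J : dyad) : dyad := (J.1 + 1, 2 * J.2).
Definition dright (J : dyad) : dyad := (J.1 + 1, 2 * J.2 + 1).

(* A matrix weight seen through its integrals W(J) = \int_J W over dyadic
   intervals: positive definite, and additive: W(J) = W(J_-) + W(J_+). *)
Definition dyadic_weight (W : dyad -> 'M[F]_d) : Prop :=
  forall J, posdef (W J) /\ W J = W (dleft J) + W (dright J).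

Definition Mmat (W : dyad -> 'M[F]_d) (J : dyad) : 'M[F]_d :=
  W J *m invmx (W (dright J)) *m W (dleft J).

Definition orthonormal_eigenbasis (M : 'M[F]_d) (v : 'I_d -> 'cV[F]_d) : Prop :=
  (forall i j, inner (v i) (v j) = (i == j)%:R) /\
  (forall j, exists lam : F, M *m v j = lam *: v j).

(* values of h_J^{W,j} on J_+ and on J_-, with w = w_J^j *)
Definition haar_plus (W : dyad -> 'M[F]_d) (J : dyad) (w : F) (vj : 'cV[F]_d) :=
  w^-1 *: (invmx (W (dright J)) *m W (dleft J) *m vj).
Definition haar_minus (w : F) (vj : 'cV[F]_d) : 'cV[F]_d := w^-1 *: (- vj).

End Defs.

(* Main.v *)
Require Import Defs.
From HB Require Import structures.
From mathcomp Require Import all_boot all_order all_algebra.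
Import Order.TTheory GRing.Theory Num.Theory.
Local Open Scope ring_scope.

Set Implicit Arguments.
Section Aux.
Variables (F : numClosedFieldType) (d : nat).

Lemma adjM m n p (A : 'M[F]_(m, n)) (B : 'M[F]_(n, p)) :
  adj (A *m B) = adj B *m adj A.
Proof. by rewrite /adj trmx_mul map_mxM. Qed.

Lemma adjK m n (A : 'M[F]_(m, n)) : adj (adj A) = A.
Proof. by apply/matrixP => i j; rewrite !mxE conjCK. Qed.

Lemma adjZ m n c (A : 'M[F]_(m, n)) : adj (c *: A) = c^* *: adj A.
Proof. by apply/matrixP => i j; rewrite !mxE rmorphM. Qed.

Lemma adjN m n (A : 'M[F]_(m, n)) : adj (- A) = - adj A.
Proof. by apply/matrixP => i j; rewrite !mxE rmorphN. Qed.

Lemma herm_adj (S : 'M[F]_d) : S \is hermsymmx -> adj S = S.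
Proof. by move/is_hermitianmxP => {2}->; rewrite expr0 scale1r. Qed.

Lemma vnorm_ge0 (x : 'cV[F]_d) : 0 <= vnorm x.
Proof. by rewrite /vnorm sqrtC_ge0 sumr_ge0 // => i _; rewrite exprn_ge0. Qed.

Lemma vnorm_sq (x : 'cV[F]_d) : vnorm x ^+ 2 = (adj x *m x) 0 0.
Proof.
rewrite /vnorm sqrtCK !mxE; apply: eq_bigr => i _.
by rewrite !mxE normCK mulrC.
Qed.

Lemma vnorm_sqrt (S A : 'M[F]_d) (x : 'cV[F]_d) : is_sqrtm S A ->
  vnorm (S *m x) ^+ 2 = (adj x *m A *m x) 0 0.
Proof.
move=> [[hS _] <-]; rewrite vnorm_sq adjM herm_adj //.
by rewrite !mulmxA.
Qed.

Lemma qZ (A : 'M[F]_d) c (x : 'cV[F]_d) :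
  (adj (c *: x) *m A *m (c *: x)) 0 0 = `|c| ^+ 2 * (adj x *m A *m x) 0 0.
Proof.
by rewrite adjZ -!scalemxAl -scalemxAr !mxE normCKC mulrA.
Qed.

Lemma qN (A : 'M[F]_d) (x : 'cV[F]_d) :
  (adj (- x) *m A *m (- x)) 0 0 = (adj x *m A *m x) 0 0.
Proof. by rewrite adjN mulNmx mulmxN mulNmx opprK. Qed.

Lemma posdef_unit (B : 'M[F]_d) : posdef B -> B \in unitmx.
Proof.
move=> [_ hB]; rewrite unitmxE unitfE; apply/negP => /det0P [u u0 uB].
have nz : adj u != 0.
  apply: contra u0 => /eqP h; rewrite -[u]adjK h; apply/eqP/matrixP => i j.
  by rewrite !mxE rmorph0.
by have := hB _ nz; rewrite adjK uB mul0mx mxE ltxx.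
Qed.

Lemma frac_le1 (a b : F) : 0 <= a -> 0 <= b -> (sqrtC (a + b))^-1 ^+ 2 * a <= 1.
Proof.
move=> a0 b0; rewrite exprVn sqrtCK.
have [->|nz] := eqVneq (a + b) 0; first by rewrite invr0 mul0r ler01.
have pos : 0 < a + b by rewrite lt_def nz addr_ge0.
by rewrite mulrC ler_pdivrMr // mul1r lerDl.
Qed.

Lemma vnorm_le1 (x : 'cV[F]_d) : vnorm x ^+ 2 <= 1 -> vnorm x <= 1.
Proof. by rewrite expr_le1 // vnorm_ge0. Qed.

End Aux.

Theorem lemma2p3 :
  forall d : nat, exists C : nat,
  forall (F : numClosedFieldType) (W : dyad -> 'M[F]_d),
  dyadic_weight W ->
  forall (J : dyad) (v : 'I_d -> 'cV[F]_d),
  orthonormal_eigenbasis (Mmat W J) v ->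
  forall (SM Sm Sp : 'M[F]_d),
  is_sqrtm SM (Mmat W J) ->
  is_sqrtm Sm (W (dleft J)) ->
  is_sqrtm Sp (W (dright J)) ->
  forall j : 'I_d,
  let w := vnorm (SM *m v j) in
  vnorm (Sm *m haar_minus w (v j)) <= C%:R /\
  vnorm (Sp *m haar_plus W J w (v j)) <= C%:R.
Proof.
move=> d; exists 1%N => F W hW J v _ SM Sm Sp hM hm hp j w.
set A := W (dleft J); set B := W (dright J); set x := v j.
have [hA hAB] := hW (dleft J).
have [hB _] := hW (dright J).
have [_ hJ] := hW J.
have Bu : B \in unitmx by exact: posdef_unit.
have Ah : adj A = A by apply: herm_adj; case: hA.
set y := invmx B *m A *m x.
have By : B *m y = A *m x by rewrite /y -mulmxA mulKVmx.
set a := (adj x *m A *m x) 0 0.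
set b := (adj y *m B *m y) 0 0.
have a0 : 0 <= a by rewrite /a -(vnorm_sqrt _ hm) exprn_ge0 // vnorm_ge0.
have b0 : 0 <= b by rewrite /b -(vnorm_sqrt _ hp) exprn_ge0 // vnorm_ge0.
have Bh : adj B = B by apply: herm_adj; case: hB.
have w2 : w ^+ 2 = a + b.
  rewrite /w (vnorm_sqrt _ hM) /Mmat hJ -/A -/B.
  have ey : invmx B *m (A *m x) = y by rewrite /y mulmxA.
  have key : adj x *m ((A + B) *m invmx B *m A) *m x =
             adj x *m A *m x + adj y *m B *m y.
    rewrite -!mulmxA ey mulmxDl By mulmxDr addrC; congr (_ + _).
    by rewrite mulmxA -{1}Ah -adjM -By adjM Bh -mulmxA By.
  by rewrite key mxE.
have hw : w = sqrtC (a + b) by rewrite -w2 sqrCK // vnorm_ge0.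
have wr : `|w^-1| = w^-1 by rewrite ger0_norm // invr_ge0 vnorm_ge0.
split; apply: vnorm_le1.
  by rewrite (vnorm_sqrt _ hm) /haar_minus qZ qN wr -/a hw frac_le1.
rewrite (vnorm_sqrt _ hp) /haar_plus qZ -/x -/A -/B -/y -/b wr hw addrC.
exact: frac_le1.
Qed.
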